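(* Let $\mathcal{X} \subseteq \mathbb{R}^m$ be countable and let $\widehat\nu = \sum_{j=1}^N \widehat\nu_j \delta_{\widehat x_j}$ be a probability mass function on $\mathcal{X}$ supported on $N$ distinct points $\widehat x_1,\dots,\widehat x_N \in \mathcal{X}$ with $\widehat\nu_j > 0$ for all $j$ and $\sum_j \widehat\nu_j = 1$. For $\varepsilon \ge 0$ let $\mathbb{B}_{\mathrm{KL}}(\widehat\nu,\varepsilon) = \{\nu \in \mathcal{M}(\mathcal{X}) : \mathrm{KL}(\widehat\nu \parallel \nu) \le \varepsilon\}$. Then for any $\varepsilon \ge 0$ and any $x \in \mathcal{X}$ there exists a measure $\nu^\star_{\mathrm{KL}} \in \mathbb{B}_{\mathrm{KL}}(\widehat\nu,\varepsilon)$ such that $$\sup_{\nu \in \mathbb{B}_{\mathrm{KL}}(\widehat\nu,\varepsilon)} \nu(x) = \nu^\star_{\mathrm{KL}}(x).$$ Moreover, $\nu^\star_{\mathrm{KL}}$ is supported on at most $N+1$ points and satisfies $\mathrm{supp}(\nu^\star_{\mathrm{KL}}) \subseteq \mathrm{supp}(\widehat\nu) \cup \{x\}$.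
   Context: $\mathcal{M}(\mathcal{X})$ is the set of probability mass functions supported on $\mathcal{X}$; $\delta_z$ is the Dirac measure at $z$. For $\nu_1,\nu_2 \in \mathcal{M}(\mathcal{X})$ with $\nu_1$ absolutely continuous with respect to $\nu_2$, the Kullback–Leibler divergence is $\mathrm{KL}(\nu_1 \parallel \nu_2) = \sum_{z \in \mathcal{X}} f(\nu_1(z)/\nu_2(z))\,\nu_2(z)$ with $f(t) = t\log t - t + 1$ (so $f(0)=1$). *)

(* Defs.v *)
From HB Require Import structures.
From mathcomp Require Import all_boot all_order all_algebra.
From mathcomp Require Import all_classical all_reals all_analysis.
Set Implicit Arguments. Unset Strict Implicit. Unset Printing Implicit Defensive.
Import Order.TTheory GRing.Theory Num.Theory.
Local Open Scope classical_set_scope.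
Local Open Scope ring_scope.

(* Points of R^m are row vectors 'rV[R]_m; a measure on X is a function
   'rV[R]_m -> R vanishing outside X. *)

(* f(t) = t log t - t + 1; with mathcomp's ln 0 = 0 we get f(0) = 1. *)
Definition fKL (R : realType) (t : R) : R := t * ln t - t + 1.

Definition is_pmf (R : realType) (m : nat) (X : set 'rV[R]_m)
  (nu : 'rV[R]_m -> R) : Prop :=
  (forall z, 0 <= nu z) /\ (forall z, ~ X z -> nu z = 0) /\
  (\esum_(z in X) (nu z)%:E = 1%E).

Definition abs_cont (R : realType) (m : nat) (nu1 nu2 : 'rV[R]_m -> R) : Prop :=
  forall z, nu2 z = 0 -> nu1 z = 0.

(* KL(nu1 || nu2) = sum_{z in X} f(nu1 z / nu2 z) nu2 z  (an extended real;
   the terms are nonnegative), only meaningful when nu1 << nu2. *)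
Definition KLdiv (R : realType) (m : nat) (X : set 'rV[R]_m)
  (nu1 nu2 : 'rV[R]_m -> R) : \bar R :=
  \esum_(z in X) (fKL (nu1 z / nu2 z) * nu2 z)%:E.

Definition KLball (R : realType) (m : nat) (X : set 'rV[R]_m)
  (nuh : 'rV[R]_m -> R) (eps : R) : set ('rV[R]_m -> R) :=
  [set nu | is_pmf X nu /\ abs_cont nuh nu /\ (KLdiv X nuh nu <= eps%:E)%E].

Definition empirical (R : realType) (m N : nat) (w : 'I_N -> R)
  (xh : 'I_N -> 'rV[R]_m) : 'rV[R]_m -> R :=
  fun z => \sum_(j < N) w j * (xh j == z)%:R.

Definition supp (R : realType) (m : nat) (nu : 'rV[R]_m -> R) : set 'rV[R]_m :=
  [set z | nu z != 0].

(* Main.v *)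
Require Import Defs.
From HB Require Import structures.
From mathcomp Require Import all_boot all_order all_algebra.
From mathcomp Require Import all_classical all_reals all_analysis.
From mathcomp Require Import ring lra.
Import Order.TTheory GRing.Theory Num.Theory numFieldNormedType.Exports.
Local Open Scope classical_set_scope.
Local Open Scope ring_scope.
Section Aux.
Variable R : realType.

Lemma ln_le_sub1 (y : R) : 0 < y -> ln y <= y - 1.
Proof. move=> y0; have := expR_ge1Dx (ln y); rewrite lnK ?posrE //; lra. Qed.

Lemma ln_lt_sub1 (y : R) : 0 < y -> y != 1 -> ln y < y - 1.
Proof.
move=> y0 y1; have := @expR_gt1Dx R (ln y).
rewrite ln_eq0 // y1 lnK ?posrE // => /(_ isT); lra.
Qed.

Lemma ln_ge (y : R) : 0 < y -> 1 - y^-1 <= ln y.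
Proof.
move=> y0; have := ln_le_sub1 (y^-1); rewrite invr_gt0 lnV ?posrE // => /(_ y0).
lra.
Qed.

Lemma ln_gt (y : R) : 0 < y -> y != 1 -> 1 - y^-1 < ln y.
Proof.
move=> y0 y1; have := ln_lt_sub1 (y^-1); rewrite invr_gt0 lnV ?posrE // invr_eq1.
move=> /(_ y0 y1); lra.
Qed.

Lemma fKL_ge0 (t : R) : 0 <= fKL t.
Proof.
rewrite /fKL; have [t0|t0] := leP t 0; first by rewrite ln0 // mulr0; lra.
have := @ln_ge t t0 => h.
have : t * (1 - t^-1) <= t * ln t by rewrite ler_pM2l.
rewrite mulrBr mulr1 divff ?gt_eqF //; lra.
Qed.

Lemma term_eq (a b : R) : 0 <= b -> (b = 0 -> a = 0) ->
  fKL (a / b) * b = a * ln (a / b) - a + b.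
Proof.
move=> b0 ab; have [b00|bn0] := eqVneq b 0.
  by rewrite b00 ab // mulr0 !mul0r subr0 addr0.
rewrite /fKL; field; exact: bn0.
Qed.

End Aux.
Section Aux2.
Variable R : realType.

Lemma esum_seq (T : choiceType) (X : set T) (F : seq T) (f : T -> R) :
  uniq F -> (forall z, z \in F -> X z) -> (forall z, X z -> 0 <= f z) ->
  (forall z, X z -> z \notin F -> f z = 0) ->
  \esum_(z in X) (f z)%:E = (\sum_(z <- F) f z)%:E.
Proof.
move=> uF FX f0 fF.
rewrite (esumID [set` F]); last by move=> z /f0; rewrite lee_fin.
rewrite [X in (_ + X)%E]esum1 ?adde0; last first.
  move=> z [Xz nF]; rewrite fF //; apply/negP => zF; exact: nF.
have -> : X `&` [set` F] = [set` F].
  by apply/seteqP; split => z; [case | move=> zF; split => //; exact: FX].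
rewrite esum_fset.
- by rewrite -fsbig_seq // sumEFin.
- exact: finite_seq.
- by move=> z; rewrite inE => /FX /f0; rewrite lee_fin.
Qed.

Lemma esum_ge_seq (T : choiceType) (X : set T) (F : seq T) (f : T -> R) :
  uniq F -> (forall z, z \in F -> X z) ->
  ((\sum_(z <- F) f z)%:E <= \esum_(z in X) (f z)%:E)%E.
Proof.
move=> uF FX; apply: esum_ge; exists [set` F].
  by split; [exact: finite_seq | move=> z /FX].
by rewrite -fsbig_seq // sumEFin.
Qed.

Lemma logsum_bound (I : finType) (P : pred I) (a b : I -> R) (A D : R) :
  (forall i, P i -> 0 < a i) -> (forall i, P i -> 0 < b i) ->
  \sum_(i | P i) a i = A -> 0 < A -> 0 < D -> D <= A ->
  \sum_(i | P i) b i <= D ->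
  A * ln (A / D) + D - A <= \sum_(i | P i) (a i * ln (a i / b i) - a i + b i).
Proof.
move=> a0 b0 hA A0 D0 DA hS.
have hstep i : P i ->
    a i * ln (A / D) + b i * (1 - A / D) <= a i * ln (a i / b i) - a i + b i.
  move=> Pi; have ai := a0 i Pi; have bi := b0 i Pi.
  have y0 : 0 < a i * D / (b i * A) by rewrite divr_gt0 ?mulr_gt0.
  have e : a i / b i = (A / D) * (a i * D / (b i * A)).
    by field; rewrite !gt_eqF.
  rewrite e (@lnM _ (A / D) (a i * D / (b i * A))) ?posrE ?divr_gt0 //.
  have := @ln_ge _ _ y0; rewrite invf_div => h.
  have : a i * (1 - b i * A / (a i * D)) <= a i * ln (a i * D / (b i * A)).
    by rewrite ler_pM2l.
  have -> : a i * (1 - b i * A / (a i * D)) = a i - b i * (A / D).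
    by field; rewrite !gt_eqF.
  move=> h2; rewrite mulrBr mulr1 [a i * (_ + _)]mulrDr; first lra.
  all: try by rewrite ?mulr_gt0 ?divr_gt0.

have := ler_sum (index_enum I) hstep; rewrite big_split /= -!mulr_suml hA.
set S := \sum_(i | P i) b i in hS *.
set q := A / D.
have q1 : 1 <= q by rewrite /q ler_pdivlMr // mul1r.
have Dq : D * q = A by rewrite /q mulrC divfK // gt_eqF.
have : (D - S) * (1 - q) <= 0 by rewrite mulr_ge0_le0 //; lra.
rewrite -Dq mulrBr mulrBl !mulr1 => h1 h2.
rewrite mulrBr mulr1 in h2. lra.
Qed.

Definition phi (c t : R) := c * ln (c / t) + (1 - c) * ln ((1 - c) / (1 - t)).

Lemma phi_psi (c t : R) : 0 <= c < 1 -> c <= t < 1 ->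
  phi c t = c * ln c - c * ln t + ((1 - c) * ln (1 - c) - (1 - c) * ln (1 - t)).
Proof.
move=> /andP[c0 c1] /andP[ct t1]; rewrite /phi.
rewrite (@ln_div _ (1 - c)) ?posrE ?subr_gt0 //.
have [->|cp] := eqVneq c 0; first by rewrite !mul0r; lra.
have cp' : 0 < c by rewrite lt_def cp.
rewrite ln_div ?posrE //; last by lra.
by rewrite !mulrBr.
Qed.

Lemma phi_mono (c t1 t2 : R) : 0 <= c < 1 -> c <= t1 -> t1 < t2 -> t2 < 1 ->
  phi c t1 < phi c t2.
Proof.
move=> /andP[c0 c1] ct1 t12 t21.
rewrite !phi_psi ?c0 ?c1 ?ct1 ?t21 ?(le_trans ct1 (ltW t12)) ?(lt_trans t12 t21) //.
have A0 : 0 < 1 - c by lra.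
have hl : ln (1 - t2) < ln (1 - t1) by rewrite ltr_ln ?posrE; lra.
have [->|cp] := eqVneq c 0.
  rewrite !mul0r subr0; have : (1 - 0) * ln (1 - t2) < (1 - 0) * ln (1 - t1).
    by rewrite ltr_pM2l //; lra.
  lra.
have cp' : 0 < c by rewrite lt_def cp.
have t10 : 0 < t1 by lra.
have h1 : 1 - t2 / t1 <= ln (t1 / t2).
  by have := @ln_ge _ (t1 / t2); rewrite invf_div; apply; rewrite divr_gt0 //; lra.
have h2 : 1 - (1 - t2) / (1 - t1) < ln ((1 - t1) / (1 - t2)).
  have := @ln_gt _ ((1 - t1) / (1 - t2)); rewrite invf_div; apply.
    by rewrite divr_gt0 //; lra.
  by apply/eqP => /(congr1 (fun u => u * (1 - t2))); rewrite divfK ?mul1r; lra.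
rewrite ln_div ?posrE in h1; try lra.
rewrite ln_div ?posrE in h2; try lra.
have k1 : c * (1 - t2 / t1) <= c * (ln t1 - ln t2) by rewrite ler_pM2l.
have k2 : (1 - c) * (1 - (1 - t2) / (1 - t1)) < (1 - c) * (ln (1 - t1) - ln (1 - t2)).
  by rewrite ltr_pM2l.
have key : 0 <= c * (1 - t2 / t1) + (1 - c) * (1 - (1 - t2) / (1 - t1)).
  have -> : c * (1 - t2 / t1) + (1 - c) * (1 - (1 - t2) / (1 - t1)) =
      (t2 - t1) * (t1 - c) / (t1 * (1 - t1)).
    by field; apply/andP; split; rewrite gt_eqF //; lra.
  apply: divr_ge0; first by apply: mulr_ge0; lra.
  by apply: mulr_ge0; lra.
lra.
Qed.

End Aux2.
Section Aux3.
Variable R : realType.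

Lemma tstar_exists (c eps : R) : 0 <= c < 1 -> 0 <= eps ->
  exists2 t, c <= t < 1 & @phi R c t = eps.
Proof.
move=> /andP[c0 c1] e0.
set A := 1 - c.
have A0 : 0 < A by rewrite /A; lra.
set u := (eps + 1) / A.
have u0 : 0 <= u by rewrite /u divr_ge0 //; lra.
set T := 1 - A * expR (- u).
have ex0 := expR_gt0 (- u).
have ex1 : expR (- u) <= 1 by rewrite expR_le1; lra.
have hT1 : T < 1 by rewrite /T; have := mulr_gt0 A0 ex0; lra.
have hcT : c <= T.
  rewrite /T; have : A * expR (- u) <= A * 1 by rewrite ler_pM2l.
  rewrite /A; lra.
pose psi := fun s : R => c * ln c - c * ln s + ((1 - c) * ln (1 - c) - (1 - c) * ln (1 - s)).
have psi_phi s : c <= s -> s < 1 -> @phi R c s = psi s.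
  by move=> cs s1; rewrite phi_psi ?c0 ?c1 ?cs ?s1.
have psic : psi c = 0 by rewrite /psi; lra.
have psiT : eps <= psi T.
  rewrite -psi_phi // /phi.
  have h1 : c - T <= c * ln (c / T).
    have [->|cp] := eqVneq c 0; first by rewrite mul0r; lra.
    have cp' : 0 < c by rewrite lt_def cp.
    have T0 : 0 < T by lra.
    have := @ln_ge _ (c / T); rewrite invf_div => /(_ (divr_gt0 cp' T0)) h.
    have : c * (1 - T / c) <= c * ln (c / T) by rewrite ler_pM2l.
    by rewrite mulrBr mulr1 mulrC divfK ?gt_eqF.
  have h2 : (1 - c) * ln ((1 - c) / (1 - T)) = eps + 1.
    have -> : 1 - T = A * expR (- u) by rewrite /T; lra.
    rewrite -/A invfM mulrA divff ?gt_eqF // mul1r -expRN opprK expRK.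
    by rewrite /u mulrC divfK ?gt_eqF.
  lra.
have hpsi : forall s, c <= s -> s <= T -> {for s, continuous psi}.
  move=> s cs sT.
  have hlc : {for s, continuous (fun s : R => c * ln s)}.
    have [c00|cp] := eqVneq c 0.
      have -> : (fun s : R => c * ln s) = (fun=> 0) by apply: funext => r; rewrite c00 mul0r.
      exact: cst_continuous.
    have cp' : 0 < c by rewrite lt_def cp.
    apply: continuousM; first exact: cst_continuous.
    apply: continuous_ln; lra.
  rewrite /psi; apply: continuousD; [apply: continuousB|apply: continuousB].
  + exact: cst_continuous.
  + exact: hlc.
  + exact: cst_continuous.
  + apply: continuousM; first exact: cst_continuous.
    have h1 : {for s, continuous (fun s : R => 1 - s)}.
      by apply: continuousB; [exact: cst_continuous|exact: id].
    exact: (continuous_comp h1 (@continuous_ln R (1 - s) ltac:(lra))).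
have := @IVT R psi c T eps hcT.
case.
- apply: continuous_in_subspaceT => s; rewrite inE /= in_itv /= => /andP[cs sT].
  exact: hpsi.
- have hle : psi c <= psi T by lra.
  by rewrite (min_idPl hle) (max_idPr hle) psic e0 psiT.
- move=> t; rewrite in_itv /= => /andP[ct tT] pt.
  exists t; first by rewrite ct /=; lra.
  by rewrite psi_phi //; lra.
Qed.

End Aux3.
Theorem mainTheorem2 (R : realType) (m N : nat) (X : set 'rV[R]_m)
  (xh : 'I_N -> 'rV[R]_m) (w : 'I_N -> R)
  (hX : countable X)
  (hxhX : forall j, X (xh j))
  (hinj : injective xh)
  (hpos : forall j, 0 < w j)
  (hsum : \sum_(j < N) w j = 1)
  (eps : R) (heps : 0 <= eps) (x : 'rV[R]_m) (hx : X x) :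
  exists nustar : 'rV[R]_m -> R,
    KLball X (empirical w xh) eps nustar /\
    sup [set nu x | nu in KLball X (empirical w xh) eps] = nustar x /\
    (exists s : seq 'rV[R]_m, (size s <= N.+1)%N /\
       supp nustar `<=` [set z | z \in s]) /\
    supp nustar `<=` supp (empirical w xh) `|` [set x].
Proof.
pose nuh := empirical w xh.
have nuh_xh j : nuh (xh j) = w j.
  rewrite /nuh /empirical (bigD1 j) //= eqxx mulr1 big1 ?addr0 // => i ij.
  by rewrite (inj_eq hinj) (negbTE ij) mulr0.
have nuh0 z : (forall j, xh j != z) -> nuh z = 0.
  by move=> h; rewrite /nuh /empirical big1 // => j _; rewrite (negbTE (h j)) mulr0.
have nuh_ge0 z : 0 <= nuh z.
  by rewrite /nuh /empirical sumr_ge0 // => j _; rewrite mulr_ge0 ?ler0n // ltW.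
set c := nuh x.
set A := 1 - c.
have hAc : A = 1 - c by [].
have hc : c = \sum_(j < N | xh j == x) w j.
  rewrite /c /nuh /empirical [RHS]big_mkcond /=; apply: eq_bigr => j _.
  by case: eqP => _; rewrite ?mulr1 ?mulr0.
have hA : \sum_(j < N | xh j != x) w j = A.
  by move: hsum; rewrite (bigID (fun j => xh j == x)) /= -hc /A => h; lra.
have A_ex : 0 < A -> exists j, xh j != x.
  move=> A0; case: (pickP (fun j => xh j != x)) => [j hj|none]; first by exists j.
  by move: A0; rewrite -hA big_pred0 // ltxx.
have A0_all : A = 0 -> forall j, xh j = x.
  move=> A0 j; apply/eqP; apply: contraT => hj.
  have : w j <= A.
    by rewrite -hA (bigD1 j) //= lerDl sumr_ge0 // => i _; exact: ltW.
  have := hpos j; lra.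
have c0 : 0 <= c := nuh_ge0 x.
have A0 : 0 <= A by rewrite -hA sumr_ge0 // => j _; exact: ltW.
have c1 : c <= 1 by rewrite /A in A0; lra.
have [t [ht1 ht2 ht3 ht4 ht5]] : exists t : R, [/\ c <= t <= 1, (A = 0 -> t = 1),
    (0 < A -> t < 1), @phi R c t <= eps &
    (0 < A -> forall b, c < b -> b < 1 -> @phi R c b <= eps -> b <= t)].
  have [Ap|Ale] := ltP 0 A.
    have cl1 : c < 1 by rewrite /A in Ap; lra.
    have c01 : 0 <= c < 1 by rewrite c0 cl1.
    have [t /andP[ct t1] pt] := @tstar_exists R c eps c01 heps.
    exists t; split => //.
    - by rewrite ct ltW.
    - by move=> A00; rewrite A00 ltxx in Ap.
    - by rewrite pt.
    - move=> _ b cb b1 pb; rewrite leNgt; apply/negP => tb.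
      have := @phi_mono R c t b c01 ct tb b1; lra.
  have A00 : A = 0 by apply/eqP; rewrite eq_le Ale A0.
  have c1' : c = 1 by rewrite /A in A00; lra.
  exists 1; split.
  - by rewrite c1' lexx.
  - by [].
  - by [].
  - by rewrite /phi c1' subrr divr1 ln1 mulr0 mul0r addr0.
  - by [].
pose r := (1 - t) / A.
have Ar : A * r = 1 - t.
  have [Ap|Ale] := ltP 0 A; first by rewrite /r mulrC divfK // gt_eqF.
  have A00 : A = 0 by apply/eqP; rewrite eq_le Ale A0.
  by rewrite A00 mul0r ht2 // subrr.
have r0 : 0 <= r by rewrite /r divr_ge0 //; case/andP: ht1 => _ ?; lra.
pose F' := map xh (seq.filter (fun j => xh j != x) (index_enum 'I_N)).
pose F := x :: F'.
have uF : uniq F.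
  rewrite /F /F' /= ; apply/andP; split.
  - apply/negP => hin; have [j] := mapP hin; rewrite mem_filter => /andP[hj _] e.
    by rewrite -e eqxx in hj.
  - by rewrite map_inj_uniq // filter_uniq // index_enum_uniq.
have FX z : z \in F -> X z.
  rewrite /F /F' in_cons => /orP[/eqP -> //| /mapP [j _ ->]]; exact: hxhX.
have sumF (h : 'rV[R]_m -> R) :
    \sum_(z <- F) h z = h x + \sum_(j < N | xh j != x) h (xh j).
  by rewrite big_cons big_map big_filter.
have notF z : z != x -> z \notin F -> nuh z = 0.
  move=> zx zF; apply: nuh0 => j; apply/eqP => e; move: zF.
  rewrite /F /F' in_cons negb_or => /andP[_] /negP; apply; apply/mapP; exists j => //.
  by rewrite mem_filter e zx mem_index_enum.
have sizeF : (size F <= N.+1)%N.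
  rewrite /F /= ltnS size_map size_filter.
  apply: (leq_trans (count_size _ _)).
  by rewrite /index_enum unlock /= -enumT -cardT card_ord.
have t0 : 0 <= t by case/andP: ht1 => ct _; lra.
have t1 : t <= 1 by case/andP: ht1.
have ct : c <= t by case/andP: ht1.
pose g := fun z => if z == x then t else nuh z * r.
have gx : g x = t by rewrite /g eqxx.
have gz z : z != x -> g z = nuh z * r by move=> zx; rewrite /g (negbTE zx).
have g_ge0 z : 0 <= g z.
  by rewrite /g; case: ifP => _ //; rewrite mulr_ge0.
have gF z : X z -> z \notin F -> g z = 0.
  move=> Xz zF; have zx : z != x.
    by apply: contraNN zF => /eqP ->; rewrite mem_head.
  by rewrite gz // notF // mul0r.
have gball : KLball X nuh eps g.
  split; [split; [exact: g_ge0 | split] | split].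
  - move=> z nXz; have zx : z != x by apply/eqP => e; apply: nXz; rewrite e.
    rewrite gz // nuh0 ?mul0r // => j; apply/eqP => e; apply: nXz; rewrite -e.
    exact: hxhX.
  - rewrite (@esum_seq R _ X F g uF FX (fun z _ => g_ge0 z) gF).
    rewrite sumF gx (eq_bigr (fun j => w j * r)); last first.
      by move=> j hj; rewrite gz // nuh_xh.
    by rewrite -mulr_suml hA Ar; congr (_%:E); lra.
  - move=> z; have [->|zx] := eqVneq z x.
      by rewrite gx => t00; apply/eqP; rewrite -/c eq_le c0 andbT; rewrite -t00.
    have [A00|Ap] := eqVneq A 0.
      by move=> _; apply: nuh0 => j; rewrite A0_all // eq_sym.
    have Ap' : 0 < A by rewrite lt_def Ap A0.
    have rp : 0 < r by rewrite /r divr_gt0 // subr_gt0 ht3.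
    by rewrite gz // => /eqP; rewrite mulf_eq0 (gt_eqF rp) orbF => /eqP.
  - rewrite /KLdiv (@esum_seq R _ X F _ uF FX); first last.
    + by move=> z Xz zF; rewrite gF // mulr0.
    + by move=> z _; rewrite mulr_ge0 // fKL_ge0.
    rewrite lee_fin sumF gx term_eq //; last by move=> t00; apply/eqP; rewrite eq_le c0 andbT -t00.
    have [A00|Ap] := eqVneq A 0.
      rewrite big_pred0; last by move=> j /=; rewrite A0_all // eqxx.
      have c1' : c = 1 by rewrite /A in A00; lra.
      by rewrite -/c c1' ht2 // divr1 ln1 mulr0 addr0; lra.
    have Ap' : 0 < A by rewrite lt_def Ap A0.
    have tl1 : t < 1 by exact: ht3.
    have rp : 0 < r by rewrite /r divr_gt0 // subr_gt0.
    rewrite (eq_bigr (fun j => w j * (ln r^-1 - 1 + r))); last first.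
      move=> j hj; rewrite gz // nuh_xh term_eq; last first.
        by move=> /eqP; rewrite mulf_eq0 !gt_eqF.
        by rewrite mulr_ge0 // ltW.
      have -> : w j / (w j * r) = r^-1.
        by rewrite invfM mulrA divff ?mul1r // gt_eqF.
      by ring.
    rewrite -mulr_suml hA mulrDr mulrBr mulr1 Ar /r invf_div.
    move: ht4; rewrite /phi -/c -/A; lra.
have ubE : ubound [set nu x | nu in KLball X nuh eps] t.
  move=> _ [nu [[nu0 [nuX nu1]] [nuac nuKL]] <-].
  set b := nu x.
  have [bc|cb] := leP b c; first exact: le_trans bc ct.
  have hS1 : \sum_(z <- F) nu z <= 1.
    by have := @esum_ge_seq R _ X F nu uF FX; rewrite nu1 lee_fin.
  rewrite sumF -/b in hS1.
  set S := \sum_(j < N | xh j != x) nu (xh j) in hS1.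
  have S0 : 0 <= S by rewrite /S sumr_ge0.
  have nuj j : xh j != x -> 0 < nu (xh j).
    move=> hj; rewrite lt_def nu0 andbT; apply/eqP => e.
    by have := nuac _ e; rewrite nuh_xh => wj0; have := hpos j; rewrite wj0 ltxx.
  have [A00|Ap] := eqVneq A 0.
    have c1' : c = 1 by lra.
    lra.
  have Ap' : 0 < A by rewrite lt_def Ap A0.
  have [j0 hj0] := A_ex Ap'.
  have Sp : 0 < S.
    rewrite /S (bigD1 j0) //=; apply: lt_le_trans (nuj j0 hj0) _.
    by rewrite lerDl sumr_ge0 // => j /andP[hj _]; exact: ltW.
  have b1 : b < 1 by lra.
  apply: ht5 => //.
  have := @esum_ge_seq R _ X F (fun z => fKL (nuh z / nu z) * nu z) uF FX.
  move=> /le_trans /(_ nuKL); rewrite lee_fin sumF -/c -/b.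
  rewrite (@term_eq R c b (nu0 x)); last by move=> b0; lra.
  rewrite (eq_bigr (fun j => w j * ln (w j / nu (xh j)) - w j + nu (xh j))); last first.
    move=> j hj; rewrite nuh_xh term_eq //.
    by move=> e; have := nuj j hj; rewrite e ltxx.
  have := @logsum_bound R 'I_N (fun j => xh j != x) w (fun j => nu (xh j)) A (1 - b)
    (fun j _ => hpos j) nuj hA Ap' ltac:(lra) ltac:(lra) ltac:(rewrite -/S; lra).
  rewrite /phi -/c -/A. 
  lra.
have tE : [set nu x | nu in KLball X nuh eps] t by exists g.

exists g; split; first exact: gball.
split.
  rewrite gx; apply/eqP; rewrite eq_le; apply/andP; split.
    by apply: ge_sup => //; exists t.
  by apply: ub_le_sup => //; exists t.
split.
  exists F; split => // z; rewrite /supp /= => gz0.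
  have [->|zx] := eqVneq z x; first by rewrite mem_head.
  apply: contraT => zF; by rewrite gz // notF // mul0r eqxx in gz0.
move=> z; rewrite /supp /= => gz0.
have [->|zx] := eqVneq z x; first by right.
left; rewrite gz // in gz0; apply: contraNN gz0 => /eqP e; by rewrite /nuh e mul0r.
Qed.
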